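(* Let $n\ge1$, $\mathcal{K}=\{\texttt{a},\texttt{b}\}$, $\epsilon\ge0$ and $p=e^\epsilon/(1+e^\epsilon)$. For the uniform prior $\pi$ on $\mathcal{K}^n$ and the single-target gain function $g_{\rm T}$, $$V_{\rm T}[\pi\triangleright\mathbf{N}\mathbf{S}]=\frac12+\frac{1}{2^n}(2p-1)\binom{n-1}{\lfloor\frac{n-1}{2}\rfloor}.$$
   Context: A dataset is $x=(x_0,\dots,x_{n-1})\in\mathcal{K}^n$; its histogram $h(x)$ is the map $\kappa\mapsto|\{i:x_i=\kappa\}|$; $\#z$ is the number of datasets with histogram $z$. Full $k$-RR channel (with $k=2$) $\mathbf{N}:\mathcal{K}^n\to\mathcal{K}^n$: $\mathbf{N}_{x,y}=\prod_{i}q(y_i\mid x_i)$, $q(b\mid a)=p$ if $b=a$, $1-p$ otherwise. Shuffle channel $\mathbf{S}:\mathcal{K}^n\to\mathcal{K}^n$: $\mathbf{S}_{x,y}=1/\#h(x)$ if $h(y)=h(x)$, else $0$. $\mathbf{N}\mathbf{S}$ is the matrix product. Uniform prior $\pi_x=1/2^n$. Single-target gain function: $\mathcal{W}=\mathcal{K}$, $g_{\rm T}(w,x)=1$ if $x_0=w$, else $0$. Posterior vulnerability: $V_{\rm T}[\pi\triangleright\mathbf{C}]=\sum_{y}\max_{w}\sum_{x}\pi_x\mathbf{C}_{x,y}g_{\rm T}(w,x)$. *)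

(* Defs.v *)
From mathcomp Require Import all_boot all_order all_algebra.
From mathcomp Require Import all_classical all_reals all_analysis.
Set Implicit Arguments.
Unset Strict Implicit. Unset Printing Implicit Defensive.
Import Order.TTheory GRing.Theory Num.Theory.
Local Open Scope ring_scope.

(* Alphabet K = {a, b} is encoded as bool (a := true, b := false).
   A dataset of length n is a finite function 'I_n -> bool. *)
Definition dataset (n : nat) := {ffun 'I_n -> bool}.

Definition hist n (x : dataset n) : {ffun bool -> nat} :=
  [ffun k => #|[set i | x i == k]|].

Definition numhist (n : nat) (z : {ffun bool -> nat}) : nat :=
  #|[set x : dataset n | hist x == z]|.
Arguments numhist : clear implicits.

Definition Nch (R : realType) n (p : R) (x y : dataset n) : R :=
  \prod_(i < n) (if y i == x i then p else 1 - p).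

Definition Sch (R : realType) n (x y : dataset n) : R :=
  if hist y == hist x then ((numhist n (hist x))%:R)^-1 else 0.

Definition NSch (R : realType) n (p : R) (x y : dataset n) : R :=
  \sum_(z : dataset n) Nch p x z * Sch R z y.

Definition unif_prior (R : realType) n (x : dataset n) : R := ((2 ^ n)%:R)^-1.

Definition gT n (hn : (0 < n)%N) (w : bool) (x : dataset n) (R : realType) : R :=
  if x (Ordinal hn) == w then 1 else 0.

Definition V_T (R : realType) n (hn : (0 < n)%N) (pi : dataset n -> R)
    (C : dataset n -> dataset n -> R) : R :=
  \sum_(y : dataset n)
     Num.max (\sum_(x : dataset n) pi x * C x y * gT hn true x R)
             (\sum_(x : dataset n) pi x * C x y * gT hn false x R).

(* Main.v *)
Require Import Defs.

From mathcomp Require Import all_boot all_order all_algebra.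
From mathcomp Require Import all_classical all_reals all_analysis.
From mathcomp Require Import zify ring lra.
Import Order.TTheory GRing.Theory Num.Theory.
Local Open Scope ring_scope.
Set Implicit Arguments. Unset Strict Implicit.

Definition K n (x : dataset n) : nat := hist x true.

Lemma card_sum (T : finType) (P : pred T) : #|[set x | P x]| = (\sum_x (P x : nat))%N.
Proof.
rewrite -sum1_card big_mkcond /=; apply: eq_bigr => x _; rewrite inE; by case: (P x).
Qed.

Lemma K_sum n (x : dataset n) : K x = (\sum_i (x i : nat))%N.
Proof. by rewrite /K /hist ffunE card_sum; apply: eq_bigr => i _; rewrite eqb_id. Qed.

Lemma K_le n (x : dataset n) : (K x <= n)%N.
Proof.
rewrite K_sum -[X in (_ <= X)%N](card_ord n) -sum1_card.
by apply: leq_sum => i _; case: (x i).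
Qed.

Definition fcons m (b : bool) (t : dataset m) : dataset m.+1 :=
  [ffun i => if unlift ord0 i is Some j then t j else b].
Definition ftail m (z : dataset m.+1) : dataset m := [ffun j => z (lift ord0 j)].

Lemma fcons0 m b (t : dataset m) : fcons b t ord0 = b.
Proof. by rewrite ffunE unlift_none. Qed.

Lemma fconsS m b (t : dataset m) j : fcons b t (lift ord0 j) = t j.
Proof. by rewrite ffunE liftK. Qed.

Lemma K_fcons m b (t : dataset m) : K (fcons b t) = (b + K t)%N.
Proof.
rewrite !K_sum big_ord_recl fcons0; congr (_ + _)%N.
by apply: eq_bigr => i _; rewrite fconsS.
Qed.

Lemma big_fcons (R : Type) (idx : R) (op : Monoid.com_law idx) m
    (F : dataset m.+1 -> R) :
  \big[op/idx]_z F z =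
  op (\big[op/idx]_t F (fcons true t)) (\big[op/idx]_t F (fcons false t)).
Proof.
rewrite (reindex (fun bt : bool * dataset m => fcons bt.1 bt.2)) /=.
  rewrite -(big_bool _ (fun b => \big[op/idx]_t F (fcons b t))).
  rewrite pair_big /=; by apply: eq_bigl.
exists (fun z : dataset m.+1 => (z ord0, ftail z)) => [[b t] _ | z _] /=.
  congr (_, _); first exact: fcons0.
  by apply/ffunP => j; rewrite ffunE fconsS.
apply/ffunP => i; rewrite ffunE; case: unliftP => [j ->|->] //.
by rewrite ffunE.
Qed.


Lemma sum_fcons m (F : dataset m.+1 -> nat) :
  (\sum_z F z = \sum_t F (fcons true t) + \sum_t F (fcons false t))%N.
Proof. exact: big_fcons. Qed.

Lemma Kcount m j : (\sum_(t : dataset m) (K t == j : nat))%N = 'C(m, j).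
Proof.
elim: m j => [|m IH] j.
  rewrite bin0n (eq_bigr (fun _ => (0 == j : nat))); last first.
    by move=> t _; rewrite K_sum big_ord0.
  rewrite sum_nat_const card_ffun card_bool card_ord expn0 mul1n.
  by rewrite eq_sym.
rewrite sum_fcons.
under eq_bigr do rewrite K_fcons.
under [X in (_ + X)%N]eq_bigr do rewrite K_fcons.
case: j => [|j].
  rewrite big1 // add0n bin0.
  rewrite (eq_bigr (fun t => (K t == 0 : nat))) ?IH ?bin0 // => t _.
rewrite binS -!IH addnC; congr (_ + _)%N; apply: eq_bigr => t _ //=.
Qed.

Definition cc m k : nat := (\sum_(z : dataset m.+1) ((K z == k) && z ord0 : nat))%N.
Definition dd m k : nat := (\sum_(z : dataset m.+1) ((K z == k) && ~~ z ord0 : nat))%N.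

Lemma cc_val m k : cc m k = if k is k'.+1 then 'C(m, k') else 0%N.
Proof.
rewrite /cc sum_fcons [X in (_ + X)%N]big1 ?addn0; last first.
  by move=> t _; rewrite fcons0 andbF.
under eq_bigr do rewrite fcons0 andbT K_fcons.
case: k => [|k]; first by rewrite big1.
by rewrite -Kcount.
Qed.

Lemma dd_val m k : dd m k = 'C(m, k).
Proof.
rewrite /dd sum_fcons big1 ?add0n; last first.
  by move=> t _; rewrite fcons0 andbF.
under eq_bigr do rewrite fcons0 andbT K_fcons.
by rewrite -Kcount.
Qed.

Lemma ccdd m k : (\sum_(z : dataset m.+1) (K z == k : nat))%N = (cc m k + dd m k)%N.
Proof.
rewrite /cc /dd -big_split /=; apply: eq_bigr => z _.
by case: (K z == k); case: (z ord0).
Qed.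

Definition vb m k : nat := if k is k'.+1 then 'C(m, k') else 0%N.

Lemma bin_up m j : (j.+1 <= m - j)%N -> ('C(m, j) <= 'C(m, j.+1))%N.
Proof.
move=> h; have e := mul_bin_left m j.
have : (j.+1 * 'C(m, j) <= j.+1 * 'C(m, j.+1))%N.
  by rewrite e leq_mul2r h orbT.
by rewrite leq_mul2l.
Qed.

Lemma bin_down m j : (m - j <= j.+1)%N -> ('C(m, j.+1) <= 'C(m, j))%N.
Proof.
move=> h; have e := mul_bin_left m j.
have : (j.+1 * 'C(m, j.+1) <= j.+1 * 'C(m, j))%N.
  by rewrite e leq_mul2r h orbT.
by rewrite leq_mul2l.
Qed.

Lemma binsum (R : realDomainType) m :
  \sum_(k < m.+2) `|(vb m k)%:R - ('C(m, k))%:R : R| = 2 * ('C(m, m./2))%:R.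
Proof.
set s := m./2.
have hs := odd_double_half m.
have ho : (odd m <= 1)%N by case: (odd m).
rewrite -muln2 -/s in hs.
rewrite -(big_mkord xpredT (fun k => `|(vb m k)%:R - ('C(m, k))%:R : R|)).
rewrite (big_cat_nat _ (n := s.+1)) //=; last by lia.
rewrite (eq_big_nat _ _ (F2 := fun k => (vb m k.+1)%:R - (vb m k)%:R)); last first.
  move=> [|j] /andP[_ hj] /=; first by rewrite subr0 sub0r normrN ger0_norm.
  rewrite distrC ger0_norm // subr_ge0 ler_nat; apply: bin_up; lia.
rewrite [X in _ + X](eq_big_nat _ _ (F2 := fun k => - ((vb m k.+1)%:R - (vb m k)%:R))); last first.
  move=> [|j] /andP[h1 hj] /=; first by lia.
  rewrite opprB ger0_norm // subr_ge0 ler_nat; apply: bin_down; lia.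
rewrite sumrN !telescope_sumr //; last by lia.
rewrite /= (bin_small (ltnSn m)) subr0 opprB; ring.
Qed.

Lemma L1 (R : realType) m (p : R) (z : dataset m.+1) (w : bool) :
  \sum_(x : dataset m.+1) Nch p x z * (if x ord0 == w then 1 else 0) =
  if z ord0 == w then p else 1 - p.
Proof.
pose G (i : 'I_m.+1) (b : bool) : R := (if z i == b then p else 1 - p) *
   (if i == ord0 then (if b == w then 1 else 0) else 1).
transitivity (\sum_(x : dataset m.+1) \prod_i G i (x i)).
  apply: eq_bigr => x _; rewrite /Nch /G big_split /=; congr (_ * _).
  rewrite (bigD1 ord0) //= big1 ?mulr1 // => i /negbTE -> //.
transitivity (\prod_i \sum_b G i b).
  exact: (esym (@bigA_distr_bigA R 0 1 *%R +%R _ _ G)).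
rewrite (bigD1 ord0) //= [X in _ * X]big1 ?mulr1.
  by rewrite big_bool /G /=; clear G; case: w; case: (z ord0) => /=; ring.
move=> i /negbTE hi; rewrite big_bool /G hi /=.
by case: (z i) => /=; ring.
Qed.

Lemma hist_eq n (x y : dataset n) : (hist x == hist y) = (K x == K y).
Proof.
apply/eqP/eqP => [e | h]; first by rewrite /K e.
have HC : forall x : dataset n, #|[set i | x i == false]| = (n - K x)%N.
  move=> x'; have := cardsC [set i | x' i == true]; rewrite card_ord => E; rewrite -[X in (X - _)%N]E.
  rewrite /K /hist ffunE addKn.
  apply: eq_card => i; rewrite !inE.
  by case: (x' i).
apply/ffunP => b; case: b; first exact: h.
by rewrite !ffunE HC HC h.
Qed.

Lemma NH m (y : dataset m.+1) : numhist m.+1 (hist y) = (cc m (K y) + dd m (K y))%N.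
Proof.
rewrite /numhist (card_sum (fun x : dataset m.+1 => hist x == hist y)) -ccdd; apply: eq_bigr => x _; by rewrite hist_eq.
Qed.

Lemma NH_pos m (y : dataset m.+1) : (0 < cc m (K y) + dd m (K y))%N.
Proof.
rewrite -ccdd (bigD1 y) //= eqxx; by [].
Qed.

Lemma maxlem (R : realFieldType) (u c d p : R) : 0 <= u -> 0 <= c -> 0 <= d ->
  0 < c + d -> 0 <= 2 * p - 1 ->
  Num.max (u * (c + d)^-1 * (c * p + d * (1 - p)))
          (u * (c + d)^-1 * (c * (1 - p) + d * p)) =
  u * (2^-1 + (2 * p - 1) / 2 * (`|c - d| / (c + d))).
Proof.
move=> hu hc hd hcd hp.
have hcd0 : c + d != 0 by rewrite gt_eqF.
rewrite -maxr_pMr; last by rewrite mulr_ge0 // invr_ge0 ltW.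
have [le|lt] := leP c d.
  rewrite max_r; last by nra.
  rewrite distrC ger0_norm ?subr_ge0 //; field; lra.
rewrite max_l; last by nra.
rewrite ger0_norm ?subr_ge0 ?ltW //; field; lra.
Qed.

Lemma group (R : realType) m (F : nat -> R) :
  \sum_(y : dataset m.+1) F (K y) = \sum_(k < m.+2) F k * ((cc m k + dd m k)%N)%:R.
Proof.
rewrite (partition_big (fun y : dataset m.+1 => (inord (K y) : 'I_m.+2)) xpredT) //=.
apply: eq_bigr => k _.
transitivity (\sum_(y : dataset m.+1) F k * (K y == k : nat)%:R).
  rewrite big_mkcond; apply: eq_bigr => y _.
  have hK : (K y < m.+2)%N by rewrite ltnS K_le.
  rewrite -(inj_eq val_inj) /= inordK //.
  by case: eqP => [->|]; rewrite ?mulr1 ?mulr0.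
by rewrite -big_distrr /= -natr_sum ccdd.
Qed.

Theorem mainTheorem12 (R : realType) (n : nat) (hn : (1 <= n)%N) (eps : R)
    (heps : 0 <= eps) :
  let p := expR eps / (1 + expR eps) in
  V_T hn (@unif_prior R n) (NSch p) =
    2^-1 + ((2 ^ n)%:R)^-1 * (2 * p - 1) * ('C(n.-1, (n.-1)./2))%:R.
Proof.
move=> p.
case: n hn => // m hn.
have e0 : Ordinal hn = ord0 by apply: val_inj.
have hp : 0 <= 2 * p - 1.
  rewrite /p; have := expR_ge1Dx eps; have := expR_gt0 eps.
  set e := expR eps => he0 he1.
  have -> : 2 * (e / (1 + e)) - 1 = (e - 1) / (1 + e).
    by field; rewrite gt_eqF //; lra.
  by rewrite divr_ge0 //; lra.
set u : R := ((2 ^ m.+1)%:R)^-1.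
have hu : 0 <= u by rewrite invr_ge0.
have HA : forall (y : dataset m.+1) w,
  \sum_x unif_prior R x * NSch p x y * gT hn w x R =
  u * ((cc m (K y) + dd m (K y))%:R)^-1 *
   ((cc m (K y))%:R * (if true == w then p else 1 - p) +
    (dd m (K y))%:R * (if false == w then p else 1 - p)).
  move=> y w.
  rewrite /unif_prior /NSch /gT e0 -/u.
  transitivity (\sum_x \sum_z u * Sch R z y *
                   (Nch p x z * (if x ord0 == w then 1 else 0))).
    apply: eq_bigr => x _; rewrite big_distrr big_distrl /=.
    apply: eq_bigr => z _; rewrite !mulrA; congr (_ * _); rewrite -!mulrA; congr (_ * _); exact: mulrC.
  rewrite exchange_big /=.
  under eq_bigr do rewrite -big_distrr /= L1.
  transitivity (\sum_(z : dataset m.+1) u * ((cc m (K y) + dd m (K y))%:R)^-1 *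
      ((K z == K y : nat)%:R * (if z ord0 == w then p else 1 - p))).
    apply: eq_bigr => z _; rewrite /Sch hist_eq eq_sym.
    case: eqP => h /=; last by ring.
    by rewrite NH h; ring.
  rewrite -big_distrr /=; congr (_ * _).
  rewrite /cc /dd !natr_sum !big_distrl -big_split /=.
  apply: eq_bigr => z _.
  by case: (K z == K y); case: (z ord0) => /=; ring.
rewrite /V_T.
under eq_bigr do rewrite !HA /=.
have Hpos : forall y : dataset m.+1, 0 < (cc m (K y))%:R + (dd m (K y))%:R :> R.
  by move=> y; rewrite -natrD ltr0n NH_pos.
under eq_bigr => y _ do rewrite natrD maxlem ?ler0n ?Hpos //.

rewrite -big_distrr big_split /= sumr_const -big_distrr /=.
have := group m (fun k => `|(cc m k)%:R - (dd m k)%:R : R| / ((cc m k)%:R + (dd m k)%:R)).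
rewrite /= => ->.
rewrite (eq_bigr (fun k : 'I_m.+2 => `|(vb m k)%:R - ('C(m, k))%:R : R|)); last first.
  move=> k _; have -> : vb m k = cc m k by rewrite cc_val.
  rewrite -dd_val; have [h0|hpos] := posnP (cc m k + dd m k).
    move: h0 => /eqP; rewrite addn_eq0 => /andP[/eqP h1 /eqP h2].
    by rewrite h1 h2 subrr normr0 !mul0r.
  by rewrite natrD divfK // -natrD pnatr_eq0 -lt0n.
rewrite binsum card_ffun card_bool card_ord /= -[2^-1 *+ _]mulr_natr /u.
have hN : (2 ^ m.+1)%:R != 0 :> R by rewrite pnatr_eq0 expn_eq0.
by field.
Qed.
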